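(* Let $\mathfrak{n}$ be the real $7$-dimensional Lie algebra with basis $e_1,\dots,e_7$ whose nonzero brackets (up to antisymmetry) are $[e_1,e_2]=e_5$, $[e_1,e_3]=e_7$, $[e_1,e_5]=e_6$, $[e_2,e_4]=e_7$, $[e_2,e_5]=e_7$. Then $\mathfrak{n}$ is an Einstein nilradical.
   Context: A real nilpotent Lie algebra $\mathfrak{n}$ is called an Einstein nilradical if it admits an inner product such that the left-invariant Riemannian metric it defines on the simply connected nilpotent Lie group with Lie algebra $\mathfrak{n}$ is a nilsoliton, i.e. its Ricci operator satisfies $\mathrm{Ric}=c\,\mathrm{Id}+D$ for some $c\in\mathbb{R}$ and some derivation $D$ of $\mathfrak{n}$. Brackets of basis elements not listed are zero. *)

(* Defs.v *)
From mathcomp Require Import all_boot all_order all_algebra.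
From mathcomp Require Import reals.
Set Implicit Arguments. Unset Strict Implicit. Unset Printing Implicit Defensive.
Import Order.TTheory GRing.Theory Num.Theory.
Local Open Scope ring_scope.

Definition ev {R : realFieldType} {n : nat} (k : 'I_n) : 'cV[R]_n := delta_mx k 0.

Definition br_of_basis (R : realFieldType) (n : nat)
  (bb : 'I_n -> 'I_n -> 'cV[R]_n) (x y : 'cV[R]_n) : 'cV[R]_n :=
  \sum_(i < n) \sum_(j < n) (x i 0 * y j 0) *: bb i j.

Definition is_lie_bracket (R : realFieldType) (n : nat)
  (br : 'cV[R]_n -> 'cV[R]_n -> 'cV[R]_n) : Prop :=
  (forall a x y z, br (a *: x + y) z = a *: br x z + br y z) /\
  (forall a x y z, br z (a *: x + y) = a *: br z x + br z y) /\
  (forall x, br x x = 0) /\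
  (forall x y z, br x (br y z) + br y (br z x) + br z (br x y) = 0).

(* nilpotent: all right-normed brackets [x1,[x2,...,[xk,y]]] of length k+1
   vanish for some k, i.e. the lower central series reaches 0 *)
Definition is_nilpotent (R : realFieldType) (n : nat)
  (br : 'cV[R]_n -> 'cV[R]_n -> 'cV[R]_n) : Prop :=
  exists k : nat, forall (s : seq 'cV[R]_n) (y : 'cV[R]_n),
    size s = k -> foldr br y s = 0.

Definition ipG (R : realFieldType) (n : nat) (G : 'M[R]_n) (x y : 'cV[R]_n) : R :=
  (x^T *m G *m y) 0 0.

Definition is_inner_product (R : realFieldType) (n : nat) (G : 'M[R]_n) : Prop :=
  G^T = G /\ forall x : 'cV[R]_n, x != 0 -> 0 < ipG G x x.

(* Levi-Civita connection of the left-invariant metric, via the Koszul formula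
   2<nabla_X Y, Z> = <[X,Y],Z> - <[Y,Z],X> + <[Z,X],Y>. *)
Definition lc_conn (R : realFieldType) (n : nat)
  (br : 'cV[R]_n -> 'cV[R]_n -> 'cV[R]_n) (G : 'M[R]_n) (x y : 'cV[R]_n)
  : 'cV[R]_n :=
  invmx G *m \col_(k < n)
    (2^-1 * (ipG G (br x y) (ev k) - ipG G (br y (ev k)) x
             + ipG G (br (ev k) x) y)).

Definition curv (R : realFieldType) (n : nat)
  (br : 'cV[R]_n -> 'cV[R]_n -> 'cV[R]_n) (G : 'M[R]_n) (x y z : 'cV[R]_n)
  : 'cV[R]_n :=
  lc_conn br G x (lc_conn br G y z) - lc_conn br G y (lc_conn br G x z)
  - lc_conn br G (br x y) z.

Definition ricci_form (R : realFieldType) (n : nat)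
  (br : 'cV[R]_n -> 'cV[R]_n -> 'cV[R]_n) (G : 'M[R]_n) (x y : 'cV[R]_n) : R :=
  \sum_(k < n) (curv br G (ev k) x y) k 0.

(* Ricci operator: <Ric X, Y> = ric(X, Y) *)
Definition ricci_op (R : realFieldType) (n : nat)
  (br : 'cV[R]_n -> 'cV[R]_n -> 'cV[R]_n) (G : 'M[R]_n) (x : 'cV[R]_n)
  : 'cV[R]_n :=
  invmx G *m \col_(j < n) ricci_form br G x (ev j).

Definition is_derivation (R : realFieldType) (n : nat)
  (br : 'cV[R]_n -> 'cV[R]_n -> 'cV[R]_n) (D : 'M[R]_n) : Prop :=
  forall x y, D *m br x y = br (D *m x) y + br x (D *m y).

Definition is_nilsoliton (R : realFieldType) (n : nat)
  (br : 'cV[R]_n -> 'cV[R]_n -> 'cV[R]_n) (G : 'M[R]_n) : Prop :=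
  exists (c : R) (D : 'M[R]_n), is_derivation br D /\
    forall x, ricci_op br G x = c *: x + D *m x.

Definition einstein_nilradical (R : realFieldType) (n : nat)
  (br : 'cV[R]_n -> 'cV[R]_n -> 'cV[R]_n) : Prop :=
  is_lie_bracket br /\ is_nilpotent br /\
  exists G : 'M[R]_n, is_inner_product G /\ is_nilsoliton br G.

(* The 7-dimensional algebra: e_1..e_7 are ev 0 .. ev 6.
   [e1,e2]=e5, [e1,e3]=e7, [e1,e5]=e6, [e2,e4]=e7, [e2,e5]=e7. *)
Definition n7_bb (R : realFieldType) (i j : 'I_7) : 'cV[R]_7 :=
  let e := fun k : nat => ev (inord k : 'I_7) in
  match nat_of_ord i, nat_of_ord j with
  | 0, 1 => e 4%N | 1, 0 => - e 4%N
  | 0, 2 => e 6%N | 2, 0 => - e 6%N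
  | 0, 4 => e 5%N | 4, 0 => - e 5%N
  | 1, 3 => e 6%N | 3, 1 => - e 6%N
  | 1, 4 => e 6%N | 4, 1 => - e 6%N
  | _, _ => 0
  end.

Definition n7_br (R : realFieldType) : 'cV[R]_7 -> 'cV[R]_7 -> 'cV[R]_7 :=
  br_of_basis (@n7_bb R).

(* Main.v *)
Require Import Defs.
From mathcomp Require Import all_boot all_order all_algebra.
From mathcomp Require Import reals.
From mathcomp Require Import ring lra.
Set Implicit Arguments. Unset Strict Implicit. Unset Printing Implicit Defensive.
Import Order.TTheory GRing.Theory Num.Theory.
Local Open Scope ring_scope.

Notation o0 := (@Ordinal 7 0 isT).
Notation o1 := (@Ordinal 7 1 isT).
Notation o2 := (@Ordinal 7 2 isT).
Notation o3 := (@Ordinal 7 3 isT).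
Notation o4 := (@Ordinal 7 4 isT).
Notation o5 := (@Ordinal 7 5 isT).
Notation o6 := (@Ordinal 7 6 isT).

Section S.
Variable R : realFieldType.

Definition mk7 (a0 a1 a2 a3 a4 a5 a6 : R) : 'cV[R]_7 :=
  \col_(k < 7) nth 0 [:: a0; a1; a2; a3; a4; a5; a6] k.

Lemma sum7 (V : nmodType) (F : 'I_7 -> V) :
  \sum_(k < 7) F k = F o0 + F o1 + F o2 + F o3 + F o4 + F o5 + F o6.
Proof.
rewrite !big_ord_recr big_ord0 /= add0r.
by congr (_ + _ + _ + _ + _ + _ + _); apply: congr1; apply: val_inj.
Qed.

Lemma ord7P (P : 'I_7 -> Prop) :
  P o0 -> P o1 -> P o2 -> P o3 -> P o4 -> P o5 -> P o6 -> forall k, P k.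
Proof.
move=> H0 H1 H2 H3 H4 H5 H6 [[|[|[|[|[|[|[|k]]]]]]] Hk];
  rewrite ?(bool_irrelevance Hk isT) //.
Qed.

Lemma mk7_eta (x : 'cV[R]_7) :
  x = mk7 (x o0 0) (x o1 0) (x o2 0) (x o3 0) (x o4 0) (x o5 0) (x o6 0).
Proof.
apply/matrixP => i j; rewrite mxE ord1; move: i; apply: ord7P => //.
Qed.

Lemma col7 (f : 'I_7 -> R) :
  \col_(k < 7) f k = mk7 (f o0) (f o1) (f o2) (f o3) (f o4) (f o5) (f o6).
Proof. apply/matrixP => i j; rewrite !mxE; move: i; apply: ord7P => //. Qed.

Lemma mk7E a0 a1 a2 a3 a4 a5 a6 k j :
  (mk7 a0 a1 a2 a3 a4 a5 a6) k j = nth 0 [:: a0; a1; a2; a3; a4; a5; a6] k.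
Proof. by rewrite mxE. Qed.

Lemma mk7D a0 a1 a2 a3 a4 a5 a6 b0 b1 b2 b3 b4 b5 b6 :
  mk7 a0 a1 a2 a3 a4 a5 a6 + mk7 b0 b1 b2 b3 b4 b5 b6 =
  mk7 (a0+b0) (a1+b1) (a2+b2) (a3+b3) (a4+b4) (a5+b5) (a6+b6).
Proof. apply/matrixP => i j; rewrite !mxE; move: i; apply: ord7P => //. Qed.

Lemma mk7B a0 a1 a2 a3 a4 a5 a6 b0 b1 b2 b3 b4 b5 b6 :
  mk7 a0 a1 a2 a3 a4 a5 a6 - mk7 b0 b1 b2 b3 b4 b5 b6 =
  mk7 (a0-b0) (a1-b1) (a2-b2) (a3-b3) (a4-b4) (a5-b5) (a6-b6).
Proof. apply/matrixP => i j; rewrite !mxE; move: i; apply: ord7P => //. Qed.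

Lemma mk7N a0 a1 a2 a3 a4 a5 a6 :
  - mk7 a0 a1 a2 a3 a4 a5 a6 = mk7 (-a0) (-a1) (-a2) (-a3) (-a4) (-a5) (-a6).
Proof. apply/matrixP => i j; rewrite !mxE; move: i; apply: ord7P => //. Qed.

Lemma mk7Z c a0 a1 a2 a3 a4 a5 a6 :
  c *: mk7 a0 a1 a2 a3 a4 a5 a6 = mk7 (c*a0) (c*a1) (c*a2) (c*a3) (c*a4) (c*a5) (c*a6).
Proof. apply/matrixP => i j; rewrite !mxE; move: i; apply: ord7P => //. Qed.

Lemma mk70 : (0 : 'cV[R]_7) = mk7 0 0 0 0 0 0 0.
Proof. apply/matrixP => i j; rewrite !mxE; move: i; apply: ord7P => //. Qed.


Lemma ev0 : ev o0 = mk7 1 0 0 0 0 0 0.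
Proof. apply/matrixP => i j; rewrite !mxE ord1; move: i; apply: ord7P => //. Qed.
Lemma inord0 : (inord 0 : 'I_7) = o0.
Proof. by apply: val_inj; rewrite /= inordK. Qed.
Lemma ev1 : ev o1 = mk7 0 1 0 0 0 0 0.
Proof. apply/matrixP => i j; rewrite !mxE ord1; move: i; apply: ord7P => //. Qed.
Lemma inord1 : (inord 1 : 'I_7) = o1.
Proof. by apply: val_inj; rewrite /= inordK. Qed.
Lemma ev2 : ev o2 = mk7 0 0 1 0 0 0 0.
Proof. apply/matrixP => i j; rewrite !mxE ord1; move: i; apply: ord7P => //. Qed.
Lemma inord2 : (inord 2 : 'I_7) = o2.
Proof. by apply: val_inj; rewrite /= inordK. Qed.
Lemma ev3 : ev o3 = mk7 0 0 0 1 0 0 0.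
Proof. apply/matrixP => i j; rewrite !mxE ord1; move: i; apply: ord7P => //. Qed.
Lemma inord3 : (inord 3 : 'I_7) = o3.
Proof. by apply: val_inj; rewrite /= inordK. Qed.
Lemma ev4 : ev o4 = mk7 0 0 0 0 1 0 0.
Proof. apply/matrixP => i j; rewrite !mxE ord1; move: i; apply: ord7P => //. Qed.
Lemma inord4 : (inord 4 : 'I_7) = o4.
Proof. by apply: val_inj; rewrite /= inordK. Qed.
Lemma ev5 : ev o5 = mk7 0 0 0 0 0 1 0.
Proof. apply/matrixP => i j; rewrite !mxE ord1; move: i; apply: ord7P => //. Qed.
Lemma inord5 : (inord 5 : 'I_7) = o5.
Proof. by apply: val_inj; rewrite /= inordK. Qed.
Lemma ev6 : ev o6 = mk7 0 0 0 0 0 0 1.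
Proof. apply/matrixP => i j; rewrite !mxE ord1; move: i; apply: ord7P => //. Qed.
Lemma inord6 : (inord 6 : 'I_7) = o6.
Proof. by apply: val_inj; rewrite /= inordK. Qed.
Definition evE := (ev0, ev1, ev2, ev3, ev4, ev5, ev6).
Definition inordE := (inord0, inord1, inord2, inord3, inord4, inord5, inord6).
End S.

Section S2.
Variable R : realFieldType.
Definition g7 (i j : nat) : R :=
  match i, j with 0,0 => 1 | 1,1 => 1 | 2,2 => 12 | 3,3 => 4 | 3,4 => 2 | 4,3 => 2
  | 4,4 => 4 | 5,5 => 12 | 6,6 => 12 | _,_ => 0 end.
Definition gi7 (i j : nat) : R :=
  match i, j with 0,0 => 1 | 1,1 => 1 | 2,2 => 12^-1 | 3,3 => 3^-1 | 3,4 => -(6^-1) | 4,3 => -(6^-1)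
  | 4,4 => 3^-1 | 5,5 => 12^-1 | 6,6 => 12^-1 | _,_ => 0 end.
Definition G0 : 'M[R]_7 := \matrix_(i < 7, j < 7) g7 i j.
Definition Gi : 'M[R]_7 := \matrix_(i < 7, j < 7) gi7 i j.

Lemma ipE (a0 a1 a2 a3 a4 a5 a6 b0 b1 b2 b3 b4 b5 b6 : R) :
  ipG G0 (mk7 a0 a1 a2 a3 a4 a5 a6) (mk7 b0 b1 b2 b3 b4 b5 b6) =
  a0*b0 + a1*b1 + 12*a2*b2 + 4*a3*b3 + 2*a3*b4 + 2*a4*b3 + 4*a4*b4 + 12*a5*b5 + 12*a6*b6.
Proof. rewrite /ipG !mxE !sum7 !mxE !sum7 !mxE /=; ring. Qed.

Lemma GiE (a0 a1 a2 a3 a4 a5 a6 : R) :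
  Gi *m mk7 a0 a1 a2 a3 a4 a5 a6 =
  mk7 a0 a1 (12^-1*a2) (3^-1*a3 - 6^-1*a4) (-(6^-1*a3) + 3^-1*a4) (12^-1*a5) (12^-1*a6).
Proof.
apply/matrixP => i j; rewrite ord1 !mxE sum7 !mxE; move: i; apply: ord7P; rewrite /=; ring.
Qed.

Lemma GGi : G0 *m Gi = 1%:M.
Proof.
apply/matrixP => i j; rewrite !mxE sum7 !mxE.
move: i; apply: ord7P; move: j; apply: ord7P; rewrite /=; field; rewrite ?pnatr_eq0 //. 
Qed.

Lemma invG : invmx G0 = Gi.
Proof.
have [uG _] := mulmx1_unit GGi.
by rewrite -[RHS]mul1mx -(mulVmx uG) -mulmxA GGi mulmx1.
Qed.

Lemma brE (a0 a1 a2 a3 a4 a5 a6 b0 b1 b2 b3 b4 b5 b6 : R) :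
  n7_br (mk7 a0 a1 a2 a3 a4 a5 a6) (mk7 b0 b1 b2 b3 b4 b5 b6) =
  mk7 0 0 0 0 (a0*b1 - a1*b0) (a0*b4 - a4*b0) (a0*b2 - a2*b0 + a1*b3 - a3*b1 + a1*b4 - a4*b1).
Proof.
rewrite /n7_br /br_of_basis !sum7 !mk7E /=.
rewrite /n7_bb /= !inordE !evE ?mk7N ?scaler0 ?addr0 ?add0r !mk7Z !mk7D.
congr mk7; ring.
Qed.

Lemma lcE (a0 a1 a2 a3 a4 a5 a6 b0 b1 b2 b3 b4 b5 b6 : R) :
  lc_conn (@n7_br R) G0 (mk7 a0 a1 a2 a3 a4 a5 a6) (mk7 b0 b1 b2 b3 b4 b5 b6) =
  mk7 (a1*b3 + 2*a1*b4 + 6*a2*b6 + a3*b1 + 2*a4*b1 + 6*a4*b5 + 6*a5*b4 + 6*a6*b2) (- a0*b3 - 2*a0*b4 - a3*b0 + 6*a3*b6 - 2*a4*b0 + 6*a4*b6 + 6*a6*b3 + 6*a6*b4) (- (1/2)*a0*b6 - (1/2)*a6*b0) (a0*b5 - a1*b6 + a5*b0 - a6*b1) ((1/2)*a0*b1 - 2*a0*b5 - (1/2)*a1*b0 - a1*b6 - 2*a5*b0 - a6*b1) ((1/2)*a0*b4 - (1/2)*a4*b0) ((1/2)*a0*b2 + (1/2)*a1*b3 + (1/2)*a1*b4 - (1/2)*a2*b0 - (1/2)*a3*b1 - (1/2)*a4*b1).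
Proof.
rewrite /lc_conn invG col7 !evE !brE !ipE GiE.
congr mk7; field; rewrite ?pnatr_eq0 //.
Qed.

Lemma curvE (a0 a1 a2 a3 a4 a5 a6 b0 b1 b2 b3 b4 b5 b6 : R) (c0 c1 c2 c3 c4 c5 c6 : R) :
  curv (@n7_br R) G0 (mk7 a0 a1 a2 a3 a4 a5 a6) (mk7 b0 b1 b2 b3 b4 b5 b6) (mk7 c0 c1 c2 c3 c4 c5 c6) =
  mk7 (- 3*a0*b1*c1 - 3*a0*b1*c5 - 9*a0*b2*c2 + a0*b3*c3 + 2*a0*b3*c4 + 2*a0*b4*c3 - 5*a0*b4*c4 - 3*a0*b5*c1 + 12*a0*b5*c5 + 3*a0*b6*c6 + 3*a1*b0*c1 + 3*a1*b0*c5 - 3*a1*b2*c3 - 3*a1*b2*c4 - 6*a1*b3*c2 - 6*a1*b4*c2 + 6*a1*b5*c6 - 3*a1*b6*c1 + 9*a2*b0*c2 + 3*a2*b1*c3 + 3*a2*b1*c4 - 3*a2*b3*c1 - 3*a2*b4*c1 - a3*b0*c3 - 2*a3*b0*c4 + 6*a3*b1*c2 + 3*a3*b2*c1 - 6*a3*b4*c6 + 6*a3*b6*c3 + 6*a3*b6*c4 - 2*a4*b0*c3 + 5*a4*b0*c4 + 6*a4*b1*c2 + 3*a4*b2*c1 + 6*a4*b3*c6 + 12*a4*b6*c3 + 12*a4*b6*c4 + 3*a5*b0*c1 - 12*a5*b0*c5 - 6*a5*b1*c6 - 6*a5*b6*c1 - 3*a6*b0*c6 + 3*a6*b1*c1 -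 6*a6*b3*c3 - 6*a6*b3*c4 - 12*a6*b4*c3 - 12*a6*b4*c4 + 6*a6*b5*c1) (3*a0*b1*c0 - 3*a0*b1*c6 - 6*a0*b2*c3 - 6*a0*b2*c4 - 3*a0*b3*c2 - 3*a0*b4*c2 + 3*a0*b5*c0 + 6*a0*b6*c5 - 3*a1*b0*c0 + 3*a1*b0*c6 - 8*a1*b3*c3 - 7*a1*b3*c4 - 7*a1*b4*c3 - 5*a1*b4*c4 + 3*a1*b6*c0 + 12*a1*b6*c6 + 6*a2*b0*c3 + 6*a2*b0*c4 + 3*a2*b3*c0 + 6*a2*b3*c6 + 3*a2*b4*c0 + 12*a2*b4*c6 + 3*a3*b0*c2 + 8*a3*b1*c3 + 7*a3*b1*c4 - 3*a3*b2*c0 - 6*a3*b2*c6 - 6*a3*b4*c5 - 6*a3*b5*c4 - 6*a3*b6*c2 + 3*a4*b0*c2 + 7*a4*b1*c3 + 5*a4*b1*c4 - 3*a4*b2*c0 - 12*a4*b2*c6 + 6*a4*b3*c5 - 12*a4*b5*c4 - 12*a4*b6*c2 - 3*a5*b0*c0 + 6*a5*b3*c4 + 12*a5*b4*c4 + 6*a5*b6*c0 - 6*a6*b0*c5 - 3*a6*b1*c0 - 12*a6*b1*c6 + 6*a6*b3*c2 + 12*a6*b4*c2 - 6*a6*b5*c0) (- (1/4)*a0*b1*c3 - (1/4)*a0*b1*c4 + (3/4)*a0*b2*c0 + (1/4)*a0*b3*c1 + (1/4)*a0*b4*c1 + (1/4)*a1*b0*c3 + (1/4)*a1*b0*c4 +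 (1/2)*a1*b3*c0 + (1/2)*a1*b4*c0 + (1/2)*a1*b6*c3 + a1*b6*c4 - (3/4)*a2*b0*c0 + 3*a2*b6*c6 - (1/4)*a3*b0*c1 - (1/2)*a3*b1*c0 + (1/2)*a3*b6*c1 - (1/4)*a4*b0*c1 - (1/2)*a4*b1*c0 + a4*b6*c1 + 3*a4*b6*c5 + 3*a5*b6*c4 - (1/2)*a6*b1*c3 - a6*b1*c4 - 3*a6*b2*c6 - (1/2)*a6*b3*c1 - a6*b4*c1 - 3*a6*b4*c5 - 3*a6*b5*c4) ((1/2)*a0*b1*c2 + a0*b2*c1 - (3/2)*a0*b4*c0 - a0*b6*c3 - 2*a0*b6*c4 - (1/2)*a1*b0*c2 + (1/2)*a1*b2*c0 + (3/2)*a1*b3*c1 + (3/2)*a1*b4*c1 - a1*b5*c3 - 2*a1*b5*c4 - a2*b0*c1 - (1/2)*a2*b1*c0 - 6*a2*b5*c6 - (3/2)*a3*b1*c1 - a3*b5*c1 - a3*b6*c0 + 6*a3*b6*c6 + (3/2)*a4*b0*c0 - (3/2)*a4*b1*c1 - 2*a4*b5*c1 - 6*a4*b5*c5 - 2*a4*b6*c0 + 6*a4*b6*c6 + a5*b1*c3 + 2*a5*b1*c4 + 6*a5*b2*c6 + a5*b3*c1 + 2*a5*b4*c1 + 6*a5*b4*c5 + 6*a5*b6*c2 + a6*b0*c3 + 2*a6*b0*c4 + a6*b3*c0 - 6*a6*b3*c6 + 2*a6*b4*c0 - 6*a6*b4*c6 - 6*a6*b5*c2) ((1/2)*a0*b1*c2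 + a0*b2*c1 - (1/2)*a0*b3*c0 + 3*a0*b3*c6 + 2*a0*b4*c0 + 3*a0*b4*c6 + 2*a0*b6*c3 + a0*b6*c4 - (1/2)*a1*b0*c2 + (1/2)*a1*b2*c0 - 3*a1*b2*c6 + a1*b3*c1 + (1/2)*a1*b4*c1 - 3*a1*b4*c5 + 2*a1*b5*c3 + a1*b5*c4 - 3*a1*b6*c2 - a2*b0*c1 - (1/2)*a2*b1*c0 + 3*a2*b1*c6 + 12*a2*b5*c6 + (1/2)*a3*b0*c0 - 3*a3*b0*c6 - a3*b1*c1 + 2*a3*b5*c1 - a3*b6*c0 + 6*a3*b6*c6 - 2*a4*b0*c0 - 3*a4*b0*c6 - (1/2)*a4*b1*c1 + 3*a4*b1*c5 + 4*a4*b5*c1 + 12*a4*b5*c5 - 2*a4*b6*c0 + 6*a4*b6*c6 - 2*a5*b1*c3 - a5*b1*c4 - 12*a5*b2*c6 - 2*a5*b3*c1 - 4*a5*b4*c1 - 12*a5*b4*c5 - 12*a5*b6*c2 - 2*a6*b0*c3 - a6*b0*c4 + 3*a6*b1*c2 + a6*b3*c0 - 6*a6*b3*c6 + 2*a6*b4*c0 - 6*a6*b4*c6 + 12*a6*b5*c2) ((1/4)*a0*b1*c0 - (1/2)*a0*b1*c6 - a0*b5*c0 - (1/2)*a0*b6*c1 - (1/4)*a1*b0*c0 + (1/2)*a1*b0*c6 + (1/2)*a1*b4*c3 + a1*b4*c4 + 3*a2*b4*c6 + (1/2)*a3*b4*c1 - (1/2)*a4*b1*c3 - a4*b1*c4 -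 3*a4*b2*c6 - (1/2)*a4*b3*c1 - 3*a4*b5*c4 - 3*a4*b6*c2 + a5*b0*c0 + 3*a5*b4*c4 + (1/2)*a6*b0*c1 + 3*a6*b4*c2) ((1/4)*a0*b1*c1 + (1/2)*a0*b1*c5 - (1/2)*a0*b3*c3 - a0*b3*c4 - (1/2)*a0*b4*c3 - a0*b4*c4 - (1/4)*a0*b6*c0 - (1/4)*a1*b0*c1 - (1/2)*a1*b0*c5 + (1/2)*a1*b2*c3 + a1*b2*c4 - (1/2)*a1*b5*c0 - a1*b6*c1 - (1/2)*a2*b1*c3 - a2*b1*c4 - (1/2)*a2*b3*c1 - a2*b4*c1 - 3*a2*b4*c5 - 3*a2*b5*c4 - 3*a2*b6*c2 + (1/2)*a3*b0*c3 + a3*b0*c4 + (1/2)*a3*b2*c1 + (1/2)*a3*b4*c0 - 3*a3*b6*c3 - 3*a3*b6*c4 + (1/2)*a4*b0*c3 + a4*b0*c4 + a4*b2*c1 + 3*a4*b2*c5 - (1/2)*a4*b3*c0 - 3*a4*b6*c3 - 3*a4*b6*c4 + (1/2)*a5*b1*c0 + 3*a5*b2*c4 + (1/4)*a6*b0*c0 + a6*b1*c1 + 3*a6*b2*c2 + 3*a6*b3*c3 + 3*a6*b3*c4 + 3*a6*b4*c3 + 3*a6*b4*c4).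
Proof.
rewrite /curv brE !lcE !mk7B.
congr mk7; field; rewrite ?pnatr_eq0 //.
Qed.

Lemma ricfE (x0 x1 x2 x3 x4 x5 x6 y0 y1 y2 y3 y4 y5 y6 : R) :
  ricci_form (@n7_br R) G0 (mk7 x0 x1 x2 x3 x4 x5 x6) (mk7 y0 y1 y2 y3 y4 y5 y6) =
  (- (9/2)*x0*y0 - 4*x1*y1 - 6*x2*y2 - 4*x3*y3 - 2*x3*y4 - 2*x4*y3 - 4*x4*y4 + 24*x5*y5 + 30*x6*y6).
Proof.
rewrite /ricci_form sum7 !evE !curvE !mk7E /=.
field; rewrite ?pnatr_eq0 //.
Qed.

Lemma ricE (x0 x1 x2 x3 x4 x5 x6 : R) :
  ricci_op (@n7_br R) G0 (mk7 x0 x1 x2 x3 x4 x5 x6) =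
  mk7 (-(9/2)*x0) (-4*x1) (-(1/2)*x2) (-x3) (-x4) (2*x5) ((5/2)*x6).
Proof.
rewrite /ricci_op invG col7 !evE !ricfE GiE.
congr mk7; field; rewrite ?pnatr_eq0 //.
Qed.

Lemma mk7_ind (P : 'cV[R]_7 -> Prop) :
  (forall a0 a1 a2 a3 a4 a5 a6, P (mk7 a0 a1 a2 a3 a4 a5 a6)) -> forall x, P x.
Proof. by move=> H x; rewrite (mk7_eta x). Qed.

Definition d7 (i j : nat) : R :=
  match i, j with 0,0 => 3 | 1,1 => 7/2 | 2,2 => 7 | 3,3 => 13/2
  | 4,4 => 13/2 | 5,5 => 19/2 | 6,6 => 10 | _,_ => 0 end.
Definition Dm : 'M[R]_7 := \matrix_(i < 7, j < 7) d7 i j.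

Lemma DmE (a0 a1 a2 a3 a4 a5 a6 : R) :
  Dm *m mk7 a0 a1 a2 a3 a4 a5 a6 =
  mk7 (3*a0) ((7/2)*a1) (7*a2) ((13/2)*a3) ((13/2)*a4) ((19/2)*a5) (10*a6).
Proof.
apply/matrixP => i j; rewrite ord1 !mxE sum7 !mxE; move: i; apply: ord7P; rewrite /=; ring.
Qed.

Lemma lie7 : is_lie_bracket (@n7_br R).
Proof.
split; [|split; [|split]].
- move=> a x y z; elim/mk7_ind: x => x0 x1 x2 x3 x4 x5 x6.
  elim/mk7_ind: y => y0 y1 y2 y3 y4 y5 y6; elim/mk7_ind: z => z0 z1 z2 z3 z4 z5 z6.
  rewrite !mk7Z !mk7D !brE !mk7Z !mk7D; congr mk7; ring.
- move=> a x y z; elim/mk7_ind: x => x0 x1 x2 x3 x4 x5 x6.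
  elim/mk7_ind: y => y0 y1 y2 y3 y4 y5 y6; elim/mk7_ind: z => z0 z1 z2 z3 z4 z5 z6.
  rewrite !mk7Z !mk7D !brE !mk7Z !mk7D; congr mk7; ring.
- elim/mk7_ind => x0 x1 x2 x3 x4 x5 x6; rewrite brE mk70; congr mk7; ring.
- elim/mk7_ind => x0 x1 x2 x3 x4 x5 x6.
  elim/mk7_ind => y0 y1 y2 y3 y4 y5 y6; elim/mk7_ind => z0 z1 z2 z3 z4 z5 z6.
  rewrite !brE !mk7D mk70; congr mk7; ring.
Qed.

Lemma nil7 : is_nilpotent (@n7_br R).
Proof.
exists 3%N => -[|x1 [|x2 [|x3 [|? ?]]]] y //= _.
elim/mk7_ind: x1 => x0 x1 x2' x3' x4 x5 x6.
elim/mk7_ind: x2 => y0 y1 y2 y3 y4 y5 y6; elim/mk7_ind: x3 => z0 z1 z2 z3 z4 z5 z6.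
elim/mk7_ind: y => w0 w1 w2 w3 w4 w5 w6.
rewrite !brE mk70; congr mk7; ring.
Qed.

Lemma ip7 : is_inner_product G0.
Proof.
split.
  apply/matrixP => i j; rewrite !mxE; move: i; apply: ord7P; move: j; apply: ord7P => //.
elim/mk7_ind => x0 x1 x2 x3 x4 x5 x6 Hx; rewrite ipE.
rewrite ltNge; apply: contra Hx => Hq.
move: Hq; have -> : x0 * x0 + x1 * x1 + 12 * x2 * x2 + 4 * x3 * x3 + 2 * x3 * x4 +
  2 * x4 * x3 + 4 * x4 * x4 + 12 * x5 * x5 + 12 * x6 * x6 =
  x0^+2 + x1^+2 + 12 * x2^+2 + 3 * x3^+2 + (x3 + 2 * x4)^+2 + 12 * x5^+2 + 12 * x6^+2 by ring.
move=> Hq.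
have s0 := sqr_ge0 x0; have s1 := sqr_ge0 x1; have s2 := sqr_ge0 x2; have s3 := sqr_ge0 x3.
have s4 := sqr_ge0 (x3 + 2 * x4); have s5 := sqr_ge0 x5; have s6 := sqr_ge0 x6.
have z : forall t : R, t ^+ 2 = 0 -> t = 0 by move=> t /eqP; rewrite sqrf_eq0 => /eqP.
have h0 : x0 = 0 by apply: z; lra.
have h1 : x1 = 0 by apply: z; lra.
have h2 : x2 = 0 by apply: z; lra.
have h3 : x3 = 0 by apply: z; lra.
have h34 : x3 + 2 * x4 = 0 by apply: z; lra.
have h4 : x4 = 0 by lra.
have h5 : x5 = 0 by apply: z; lra.
have h6 : x6 = 0 by apply: z; lra.
by rewrite h0 h1 h2 h3 h4 h5 h6 -mk70.
Qed.

Lemma sol7 : is_nilsoliton (@n7_br R) G0.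
Proof.
exists (-(15/2)), Dm; split.
- elim/mk7_ind => x0 x1 x2 x3 x4 x5 x6; elim/mk7_ind => y0 y1 y2 y3 y4 y5 y6.
  rewrite !brE !DmE !brE !mk7D; congr mk7; field; rewrite ?pnatr_eq0 //.
- elim/mk7_ind => x0 x1 x2 x3 x4 x5 x6.
  rewrite ricE mk7Z DmE mk7D; congr mk7; field; rewrite ?pnatr_eq0 //.
Qed.
End S2.

Theorem mainTheorem16 (R : realType) : einstein_nilradical (@n7_br R).
Proof.
split; first exact: lie7.
split; first exact: nil7.
by exists (G0 R); split; [exact: ip7 | exact: sol7].
Qed.
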